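(* For every nonnegative integer $n$, $$\sum_{k=0}^{\infty}(-1)^k(4k+1)\,\frac{(-n)_k\,(-4n-\tfrac32)_k\,(\tfrac12)_k}{k!\,(n+\tfrac32)_k\,(4n+3)_k}=\left(\frac{2^8}{5^5}\right)^n\frac{(\tfrac54)_n(\tfrac34)_n(\tfrac32)_n^2}{(\tfrac65)_n(\tfrac75)_n(\tfrac35)_n(\tfrac45)_n}.$$ (The sum is finite, since $(-n)_k=0$ for $k>n$.)
   Context: $(a)_j=\Gamma(a+j)/\Gamma(a)=a(a+1)\cdots(a+j-1)$ denotes the rising factorial (Pochhammer symbol), with $(a)_0=1$. *)

(* Defs.v *)
From HB Require Import structures.
From mathcomp Require Import all_boot all_order all_algebra.
Set Implicit Arguments. Unset Strict Implicit. Unset Printing Implicit Defensive.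
Import Order.TTheory GRing.Theory Num.Theory.
Local Open Scope ring_scope.

Definition poch (a : rat) (j : nat) : rat := \prod_(i < j) (a + i%:R).

(* Main.v *)
Require Import Defs.
From HB Require Import structures.
From mathcomp Require Import all_boot all_order all_algebra.
From Stdlib Require Import ZArith Lia Ring Field.
Import Order.TTheory GRing.Theory Num.Theory.
Local Open Scope ring_scope.
Delimit Scope nat_scope with N.

Definition zr (z : Z) : rat :=
  match z with Z0 => 0 | Zpos p => (Pos.to_nat p)%:R | Zneg p => - (Pos.to_nat p)%:R end.

Lemma zrE z : zr z = (Z.to_nat z)%:R - (Z.to_nat (- z))%:R.
Proof. by case: z => [|p|p] //=; rewrite ?subr0 ?sub0r. Qed.

Lemma subr_eqsub (a b c d : rat) : a + d = c + b -> a - b = c - d.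
Proof. by move=> h; apply/eqP; rewrite subr_eq addrAC -h addrK. Qed.

Lemma zr_nat z (a b : nat) : z = (Z.of_nat a - Z.of_nat b)%Z -> zr z = a%:R - b%:R.
Proof.
move=> hz; rewrite zrE; apply: subr_eqsub; rewrite -!natrD; congr (_%:R).
have h: (Z.to_nat z + b = a + Z.to_nat (- z))%coq_nat by lia.
exact h.
Qed.

Definition radd (x y : rat) : rat := x + y.
Definition rmul (x y : rat) : rat := x * y.
Definition ropp (x : rat) : rat := - x.
Definition rinv (x : rat) : rat := x^-1.
Definition rsub (x y : rat) : rat := radd x (ropp y).
Definition rdiv (x y : rat) : rat := rmul x (rinv y).
Definition rzero : rat := 0.
Definition rone : rat := 1.
Definition rnat (n : nat) : rat := n%:R.
Definition rexp (x : rat) (n : nat) : rat := x ^+ n.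

Lemma rat_rt : @ring_theory rat rzero rone radd rmul rsub ropp eq.
Proof.
constructor; rewrite /radd /rmul /rsub /ropp /rzero /rone.
- exact: add0r.
- exact: addrC.
- exact: addrA.
- exact: mul1r.
- exact: mulrC.
- exact: mulrA.
- exact: mulrDl.
- by [].
- exact: subrr.
Qed.

Lemma h4 (p q r s : rat) : p + q - (r + s) = p - r - (s - q).
Proof. by rewrite opprB opprD addrACA addrC addrA. Qed.

Lemma zr_morph : @ring_morph rat rzero rone radd rmul rsub ropp eq
  Z 0%Z 1%Z Z.add Z.mul Z.sub Z.opp Zeq_bool zr.
Proof.
have E := zrE.
constructor; rewrite /radd /rmul /rsub /ropp /rzero /rone => //.
- move=> x y; rewrite (@zr_nat (x+y) (Z.to_nat x + Z.to_nat y) (Z.to_nat (-x) + Z.to_nat (-y))); last by rewrite -?plusE -?multE; lia.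
  by rewrite !E !natrD opprD addrACA.
- move=> x y; rewrite (@zr_nat (x-y) (Z.to_nat x + Z.to_nat (-y)) (Z.to_nat (-x) + Z.to_nat y)); last by rewrite -?plusE -?multE; lia.
  by rewrite !E !natrD opprD addrACA opprB.
- move=> x y; rewrite (@zr_nat (x*y) (Z.to_nat x * Z.to_nat y + Z.to_nat (-x) * Z.to_nat (-y))
     (Z.to_nat x * Z.to_nat (-y) + Z.to_nat (-x) * Z.to_nat y)); last by rewrite -?plusE -?multE; nia.
  by rewrite !E !natrD !natrM mulrBl !mulrBr h4.
- move=> x; rewrite (@zr_nat (-x) (Z.to_nat (-x)) (Z.to_nat x)); last by rewrite -?plusE -?multE; lia.
  by rewrite E opprB.
- by move=> x y /Zeq_bool_eq ->.
Qed.

Lemma rat_ft : @field_theory rat rzero rone radd rmul rsub ropp rdiv rinv eq.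
Proof.
constructor.
- exact: rat_rt.
- by [].
- by [].
- by move=> p hp; rewrite /rmul /rinv /rone mulVf //; apply/eqP.
Qed.

Ltac ratcst t :=
  match t with
  | zr ?z => z
  | @Algebra.natmul _ _ ?n => match isnatcst n with true => constr:(Z.of_nat n) | _ => constr:(InitialRing.NotConstant) end
  | @Algebra.zero _ => constr:(0%Z)
  | @GRing.one _ => constr:(1%Z)
  | rzero => constr:(0%Z)
  | rone => constr:(1%Z)
  | rnat ?n => match isnatcst n with true => constr:(Z.of_nat n) | _ => constr:(InitialRing.NotConstant) end
  | _ => constr:(InitialRing.NotConstant)
  end.

Add Field ratField : rat_ft (morphism zr_morph, constants [ratcst]).

Lemma rnatE (n : nat) : n%:R = rnat n :> rat. Proof. by []. Qed.
Lemma rexpE (x : rat) n : x ^+ n = rexp x n. Proof. by []. Qed.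
Lemma raddE (x y : rat) : x + y = radd x y. Proof. by []. Qed.
Lemma rmulE (x y : rat) : x * y = rmul x y. Proof. by []. Qed.
Lemma roppE (x : rat) : - x = ropp x. Proof. by []. Qed.
Lemma rinvE (x : rat) : x^-1 = rinv x. Proof. by []. Qed.

Ltac rn t :=
  lazymatch t with
  | @Algebra.add _ ?a ?b => let a' := rn a in let b' := rn b in constr:(radd a' b')
  | @GRing.mul _ ?a ?b => let a' := rn a in let b' := rn b in constr:(rmul a' b')
  | @Algebra.opp _ ?a => let a' := rn a in constr:(ropp a')
  | @GRing.inv _ ?a => let a' := rn a in constr:(rinv a')
  | @Algebra.natmul _ _ ?n => constr:(rnat n)
  | @GRing.exp _ ?a ?n => let a' := rn a in constr:(rexp a' n)
  | poch ?a ?j => let a' := rn a in constr:(poch a' j)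
  | @GRing.one _ => constr:(rone)
  | @Algebra.zero _ => constr:(rzero)
  | _ => t
  end.
Ltac rnorm := match goal with |- ?a = ?b => let a' := rn a in let b' := rn b in change (@eq rat a' b') end.
Ltac rfield := rnorm; field.
Ltac rring := rnorm; ring.


Lemma nzc (x : rat) : x != 0 -> x <> 0. Proof. by move=> h /eqP; rewrite (negbTE h). Qed.
Lemma natS (j : nat) : (j.+1)%:R = j%:R + 1 :> rat.
Proof. by rewrite mulrS addrC. Qed.

Lemma poch0 a : poch a 0 = 1.
Proof. by rewrite /poch big_ord0. Qed.

Lemma pochS a j : poch a j.+1 = poch a j * (a + j%:R).
Proof. by rewrite /poch big_ord_recr. Qed.

Lemma pochSl a j : poch a j.+1 = a * poch (a + 1) j.
Proof.
rewrite /poch big_ord_recl /= mulr0n addr0; congr (_ * _).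
by apply: eq_bigr => i _; rewrite /bump /= natrD addrA.
Qed.

Lemma up1 a j : a != 0 -> poch (a + 1) j = poch a j * (a + j%:R) / a.
Proof.
move=> /eqP ha; rewrite -pochS pochSl. rfield. exact: ha.
Qed.

Lemma down1 a j : a - 1 + j%:R != 0 -> poch (a - 1) j = (a - 1) * poch a j / (a - 1 + j%:R).
Proof.
move=> /eqP ha; have := pochSl (a - 1) j; rewrite pochS subrK => <-.
rfield. exact: ha.
Qed.

Definition Pn (x y : rat) : rat :=
  ((((((((((((((((((((((zr (0)) * y + zr (0)) * y + zr (0)) * y + zr (0)) * y + zr (0)) * y + zr (0)) * y + zr (0)) * y + zr (0)) * y + zr (-188022784))) * x + (((((((((zr (0)) * y + zr (0)) * y + zr (0)) * y + zr (0)) * y + zr (0)) * y + zr (0)) * y + zr (0)) * y + zr (0)) * y + zr (-2357010432))) * x + (((((((((zr (0)) * y + zr (0)) * y + zr (0)) * y + zr (0)) * y + zr (0)) * y + zr (0)) * y + zr (26034176)) * y + zr (-13017088)) * y + zr (-13437844480))) * x + (((((((((zr (0)) * y + zr (0)) * y + zr (0)) * y + zr (0)) * y + zr (0)) * y + zr (0)) * y + zr (275275776)) * y + zr (-137637888)) * y + zr (-46065432960))) * x + (((((((((zr (0)) * y + zr (0)) * y + zr (0)) * y + zr (0)) * y + zr (-1921024)) * y + zr (1921024)) * y + zr (1299218176)) * y + zr (-649849216)) * y + zr (-105733334208))) * x + (((((((((zr (0)) * y + zr (0)) * y + zr (0)) * y + zr (0)) * y + zr (-16728576)) * y + zr (16728576))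 * y + zr (3604100736)) * y + zr (-1804141440)) * y + zr (-171159318312))) * x + (((((((((zr (0)) * y + zr (0)) * y + zr (70656)) * y + zr (-105984)) * y + zr (-63193600)) * y + zr (63237760)) * y + zr (6507214864)) * y + zr (-3261513256)) * y + zr (-200335898648))) * x + (((((((((zr (0)) * y + zr (0)) * y + zr (484352)) * y + zr (-726528)) * y + zr (-135286624)) * y + zr (135589344)) * y + zr (7989565688)) * y + zr (-4011739080)) * y + zr (-170803501890))) * x + (((((((((zr (-1024)) * y + zr (2048)) * y + zr (1368512)) * y + zr (-2054560)) * y + zr (-179571536)) * y + zr (180427752)) * y + zr (6755410028)) * y + zr (-3400279890)) * y + zr (-105261173468))) * x + (((((((((zr (-5120)) * y + zr (10240)) * y + zr (2040896)) * y + zr (-3070304)) * y + zr (-151373992)) * y + zr (152654032)) * y + zr (3883898290)) * y + zr (-1961062908)) * y + zr (-45721493376))) * x + (((((((((zr (-9408)) * y + zr (18816)) * y + zr (1695504)) * y + zr (-2559720)) * y + zr (-79166328)) * y + zr (80234250)) * y + zr (1453065324)) * y + zr (-736588656)) * y + zr (-13284960012))) * x + (((((((((zr (-7488)) * y + zr (14976)) * y + zr (744480)) * y + zr (-1129824)) * y + zr (-23493420)) * y + zr (23965272)) * y + zr (319436802)) * y + zr (-162725868)) * y + zr (-2318168430))) * x + (((((((((zr (-2160)) * y + zr (4320)) * y + zr (135000)) * y + zr (-206280)) * y + zr (-3030075)) * y + zr (3116340)) * y + zr (31334715)) * y + zr (-16059060)) * y + zr (-183691800))) / (zr 10 * ((5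 * x + 3) * (5 * x + 4) * (5 * x + 6) * (5 * x + 7))).

Ltac nzs := repeat split; rewrite /radd /rmul /ropp /rinv /rzero /rone /rnat /rexp; try assumption; try (rewrite -?addrA; assumption); try (apply: nzc; done).
Ltac rf := rfield; nzs.

Lemma up4 a j : a != 0 -> a + 1 != 0 -> a + 2 != 0 -> a + 3 != 0 ->
  poch (a + 4) j = poch a j * ((a + j%:R) * (a + 1 + j%:R) * (a + 2 + j%:R) * (a + 3 + j%:R))
     / (a * (a + 1) * (a + 2) * (a + 3)).
Proof.
move=> h0 h1 h2 h3.
have e4 : a + 4 = a + 1 + 1 + 1 + 1 by rewrite -!addrA.
have e2 : a + 1 + 1 = a + 2 by rewrite -!addrA.
have e3 : a + 1 + 1 + 1 = a + 3 by rewrite -!addrA.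
rewrite e4 up1; last by rewrite -!addrA; exact: h3.
rewrite up1; last by rewrite -!addrA; exact: h2.
rewrite up1 // up1 //.
move: h0 h1 h2 h3 => /eqP h0 /eqP h1 /eqP h2 /eqP h3.
rfield; nzs.
Qed.

Lemma up4' a j : a != 0 -> a + 1 != 0 -> a + 2 != 0 -> a + 3 != 0 ->
  a + j%:R != 0 -> a + 1 + j%:R != 0 -> a + 2 + j%:R != 0 -> a + 3 + j%:R != 0 ->
  poch a j = poch (a + 4) j * (a * (a + 1) * (a + 2) * (a + 3))
     / ((a + j%:R) * (a + 1 + j%:R) * (a + 2 + j%:R) * (a + 3 + j%:R)).
Proof.
move=> h0 h1 h2 h3 h4 h5 h6 h7; rewrite up4 //.
move: h0 h1 h2 h3 h4 h5 h6 h7 => /eqP h0 /eqP h1 /eqP h2 /eqP h3 /eqP h4 /eqP h5 /eqP h6 /eqP h7.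
rfield; nzs.
Qed.

Ltac pos := first [ by [] | apply: ltr_wpDl; [nn|pos] | apply: ltr_wpDr; [pos|nn] | apply: mulr_gt0; pos | apply: divr_gt0; pos ]
with nn := first [ by [] | exact: ler0n | apply: addr_ge0; nn | apply: mulr_ge0; nn | apply: divr_ge0; nn | apply: ltW; pos ].

Lemma halfnz (p : rat) (u v : nat) : p = v%:R - u%:R - 1 / 2 -> p != 0.
Proof.
move=> ->; rewrite subr_eq0 subr_eq; apply/negP => /eqP h.
have : (v.*2)%:R = (u.*2.+1)%:R :> rat.
  by rewrite -!muln2 natS !natrM h; rfield.
move/eqP; rewrite eqr_nat => /eqP h2.
by move: (congr1 odd h2); rewrite odd_double /= odd_double.
Qed.

Definition Fn (n k : nat) : rat :=
  (-1) ^+ k * (4 * k%:R + 1) *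
     (poch (- n%:R) k * poch (- 4 * n%:R - 3 / 2) k * poch (1 / 2) k)
     / ((k`!)%:R * poch (n%:R + 3 / 2) k * poch (4 * n%:R + 3) k).

Definition rho (n : nat) : rat :=
  (2 ^+ 8 / 5 ^+ 5) * ((n%:R + 5/4) * (n%:R + 3/4) * ((n%:R + 3/2) * (n%:R + 3/2)))
    / ((n%:R + 6/5) * (n%:R + 7/5) * (n%:R + 3/5) * (n%:R + 4/5)).

Definition Gn (n k : nat) : rat :=
  if k is m.+1 then
    (-1) ^+ m * poch (- n%:R) m * poch (- 4 * n%:R - 3 / 2) m.+1 * poch (1 / 2) m.+1
      * Pn n%:R (m.+1)%:R
    / ((m`!)%:R * poch (n%:R + 3 / 2) m.+1 * poch (4 * n%:R + 3) m.+4 *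
       (((m.+1)%:R - 4 * n%:R - 3/2 - 1) * ((m.+1)%:R - 4 * n%:R - 3/2 - 2) *
        ((m.+1)%:R - 4 * n%:R - 3/2 - 3) * ((m.+1)%:R - 4 * n%:R - 3/2 - 4)))
  else 0.

Lemma shA n j : poch (- (n.+1)%:R) j.+1 = - (n.+1)%:R * poch (- n%:R) j.
Proof. rewrite pochSl; congr (_ * poch _ _); rewrite natS; rf. Qed.

Lemma shE n j : poch ((n.+1)%:R + 3 / 2) j =
  poch (n%:R + 3 / 2) j * (n%:R + 3 / 2 + j%:R) / (n%:R + 3 / 2).
Proof.
rewrite -up1; last by apply/lt0r_neq0; pos.
congr poch; rewrite natS; rf.
Qed.

Ltac rringd := first [rf | match goal with |- ?g => idtac "RRING FAIL" g end; fail].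

Lemma shH n j : poch (4 * (n.+1)%:R + 3) j =
  poch (4 * n%:R + 3) j * ((4 * n%:R + 3 + j%:R) * (4 * n%:R + 3 + 1 + j%:R)
     * (4 * n%:R + 3 + 2 + j%:R) * (4 * n%:R + 3 + 3 + j%:R))
  / ((4 * n%:R + 3) * (4 * n%:R + 3 + 1) * (4 * n%:R + 3 + 2) * (4 * n%:R + 3 + 3)).
Proof.
transitivity (poch (4 * n%:R + 3 + 4) j); first by rewrite (natS n); congr poch; rringd.
by apply: up4; apply/lt0r_neq0; pos.
Qed.

Lemma shB n j : poch (- 4 * (n.+1)%:R - 3 / 2) j =
  poch (- 4 * n%:R - 3 / 2) j *
    ((- 4 * n%:R - 3 / 2 - 4) * (- 4 * n%:R - 3 / 2 - 4 + 1) * (- 4 * n%:R - 3 / 2 - 4 + 2)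
      * (- 4 * n%:R - 3 / 2 - 4 + 3))
  / ((- 4 * n%:R - 3 / 2 - 4 + j%:R) * (- 4 * n%:R - 3 / 2 - 4 + 1 + j%:R)
      * (- 4 * n%:R - 3 / 2 - 4 + 2 + j%:R) * (- 4 * n%:R - 3 / 2 - 4 + 3 + j%:R)).
Proof.
transitivity (poch (- 4 * n%:R - 3 / 2 - 4) j); first by rewrite (natS n); congr poch; rringd.
rewrite up4'.
- congr (poch _ _ * _ / _); rringd.
- by apply: (@halfnz _ (4 * n + 5) (0)); rewrite ?natrD ?natrM; rringd.
- by apply: (@halfnz _ (4 * n + 4) (0)); rewrite ?natrD ?natrM; rringd.
- by apply: (@halfnz _ (4 * n + 3) (0)); rewrite ?natrD ?natrM; rringd.
- by apply: (@halfnz _ (4 * n + 2) (0)); rewrite ?natrD ?natrM; rringd.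
- by apply: (@halfnz _ (4 * n + 5) (j)); rewrite ?natrD ?natrM; rringd.
- by apply: (@halfnz _ (4 * n + 4) (j)); rewrite ?natrD ?natrM; rringd.
- by apply: (@halfnz _ (4 * n + 3) (j)); rewrite ?natrD ?natrM; rringd.
- by apply: (@halfnz _ (4 * n + 2) (j)); rewrite ?natrD ?natrM; rringd.
Qed.


Lemma posnz (x : rat) : 0 < x -> x <> 0.
Proof. by move=> h e; move: h; rewrite e ltxx. Qed.

Lemma poch_gt0 a j : 0 < a -> 0 < poch a j.
Proof.
move=> ha; rewrite /poch; apply: prodr_gt0 => i _.
by apply: ltr_wpDr => //; exact: ler0n.
Qed.

Lemma fact_pos (m : nat) : 0 < (m`!)%:R :> rat.
Proof. by rewrite ltr0n fact_gt0. Qed.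

Lemma zr_pos p : 0 < zr (Zpos p).
Proof. rewrite /= ltr0n; apply/ssrnat.ltP; exact: Pos2Nat.is_pos. Qed.

Ltac pos2 :=
  lazymatch goal with
  | |- is_true (0 < @Algebra.add _ _ _) => first [ apply: ltr_wpDl; [nn2|pos2] | apply: ltr_wpDr; [nn2|pos2] ]
  | |- is_true (0 < @GRing.mul _ _ _) => apply: mulr_gt0; pos2
  | |- is_true (0 < poch _ _) => apply: poch_gt0; pos2
  | |- is_true (0 < @Algebra.natmul _ _ (_`!)) => exact: fact_pos
  | |- is_true (0 < @GRing.inv _ _) => rewrite invr_gt0; pos2
  | |- is_true (0 < @Algebra.opp _ _) => fail
  | |- is_true (0 < @Algebra.natmul _ _ ?n) => (match isnatcst n with true => by rewrite ltr0n end)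
  | |- is_true (0 < zr _) => exact: zr_pos
  | |- is_true (0 < @GRing.exp _ _ _) => apply: exprn_gt0; pos2
  end
with nn2 :=
  lazymatch goal with
  | |- is_true (0 <= @Algebra.add _ _ _) => apply: addr_ge0; nn2
  | |- is_true (0 <= @GRing.mul _ _ _) => apply: mulr_ge0; nn2
  | |- is_true (0 <= @Algebra.natmul _ _ _) => exact: ler0n
  | |- _ => apply: ltW; pos2
  end.

Ltac sg := lazymatch goal with |- context [ropp _] => fail | _ => idtac end; rewrite /radd /rmul /ropp /rinv /rzero /rone /rnat /rexp; apply: posnz; pos2.

Lemma oddnz (p : rat) (u v : nat) : p = (2 * v)%:R - (2 * u + 1)%:R -> p <> 0.
Proof.
move=> -> /eqP; rewrite subr_eq0 eqr_nat => /eqP h.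
by move: (congr1 odd h); rewrite oddD !oddM.
Qed.

Lemma key_succ n m : Fn n.+1 m.+1 - rho n * Fn n m.+1 = Gn n m.+2 - Gn n m.+1.
Proof.
rewrite /Fn /Gn /rho /Pn shA shB shE shH !pochS !factS !natrM !exprS ?expr0.
rewrite ?(natS m.+3) ?(natS m.+2) ?(natS m.+1) ?(natS m) (natS n).
rfield.
repeat split.
all: try sg.
- by apply: (@oddnz _ (4 * n + 5) (m + 1)); rewrite ?natrD ?natrM; rf.
- by apply: (@oddnz _ (4 * n + 4) (m + 1)); rewrite ?natrD ?natrM; rf.
- by apply: (@oddnz _ (4 * n + 3) (m + 1)); rewrite ?natrD ?natrM; rf.
- by apply: (@oddnz _ (4 * n + 2) (m + 1)); rewrite ?natrD ?natrM; rf.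
- by apply: (@oddnz _ (4 * n + 2) (m + 2)); rewrite ?natrD ?natrM; rf.
Qed.

Lemma key_zero n : Fn n.+1 0 - rho n * Fn n 0 = Gn n 1 - Gn n 0.
Proof.
rewrite /Fn /Gn /rho /Pn !pochS !poch0 fact0 !exprS !expr0.
rfield.
repeat split; try sg.
- by apply: (@oddnz _ (4 * n + 5) 1); rewrite ?natrD ?natrM; rf.
- by apply: (@oddnz _ (4 * n + 4) 1); rewrite ?natrD ?natrM; rf.
- by apply: (@oddnz _ (4 * n + 3) 1); rewrite ?natrD ?natrM; rf.
- by apply: (@oddnz _ (4 * n + 2) 1); rewrite ?natrD ?natrM; rf.
Qed.

Lemma key n k : Fn n.+1 k - rho n * Fn n k = Gn n k.+1 - Gn n k.
Proof. by case: k => [|m]; [exact: key_zero | exact: key_succ]. Qed.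

Lemma poch_neg n k : (n < k)%N -> poch (- n%:R) k = 0.
Proof. by move=> h; rewrite /poch (bigD1 (Ordinal h)) //= addNr mul0r. Qed.

Lemma Fn_zero n k : (n < k)%N -> Fn n k = 0.
Proof. by move=> h; rewrite /Fn poch_neg // !(mul0r, mulr0). Qed.

Lemma Gn_end n : Gn n n.+2 = 0.
Proof. by rewrite /Gn poch_neg // !(mul0r, mulr0). Qed.

Lemma sum_ext n N : (n < N)%N -> \sum_(k < N) Fn n k = \sum_(k < n.+1) Fn n k.
Proof.
elim: N => // N IH; rewrite ltnS leq_eqVlt => /orP [/eqP -> // | h].
by rewrite big_ord_recr /= IH // Fn_zero // addr0.
Qed.

Lemma sum_rec n : \sum_(k < n.+2) Fn n.+1 k = rho n * \sum_(k < n.+1) Fn n k.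
Proof.
have e1 : \sum_(k < n.+2) (Fn n.+1 k - rho n * Fn n k) = 0.
  rewrite (eq_bigr (fun k : 'I_n.+2 => Gn n k.+1 - Gn n k)); last by move=> k _; rewrite key.
  rewrite -(big_mkord xpredT (fun k => Gn n k.+1 - Gn n k)) telescope_sumr // Gn_end.
  by rewrite /= subrr.
move: e1; rewrite sumrB -mulr_sumr (@sum_ext n n.+2) //.
by move/eqP; rewrite subr_eq0 => /eqP.
Qed.

Definition RHSn (n : nat) : rat := ((2 ^+ 8 / 5 ^+ 5) ^+ n : rat) *
    (poch (5 / 4) n * poch (3 / 4) n * poch (3 / 2) n ^+ 2)
    / (poch (6 / 5) n * poch (7 / 5) n * poch (3 / 5) n * poch (4 / 5) n).

Lemma RHS_rec n : RHSn n.+1 = rho n * RHSn n.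
Proof.
rewrite /RHSn /rho !pochS (exprS _ n) !expr2.
rfield.
repeat split; try sg.
Qed.

Lemma sum_eq n : \sum_(k < n.+1) Fn n k = RHSn n.
Proof.
elim: n => [|n IH].
  have -> : \sum_(k < 1) Fn 0 k = Fn 0 0 by rewrite big_ord1.
  rewrite /Fn /RHSn !poch0 !expr0 expr2 fact0; rf.
by rewrite sum_rec IH RHS_rec.
Qed.


Theorem theorem6 (n N : nat) (hN : (n < N)%N) :
  \sum_(k < N)
     (-1) ^+ k * (4 * k%:R + 1) *
     (poch (- n%:R) k * poch (- 4 * n%:R - 3 / 2) k * poch (1 / 2) k)
     / ((k`!)%:R * poch (n%:R + 3 / 2) k * poch (4 * n%:R + 3) k)
  = ((2 ^+ 8 / 5 ^+ 5) ^+ n : rat) *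
    (poch (5 / 4) n * poch (3 / 4) n * poch (3 / 2) n ^+ 2)
    / (poch (6 / 5) n * poch (7 / 5) n * poch (3 / 5) n * poch (4 / 5) n).
Proof.
have := @sum_ext n N hN; rewrite sum_eq /Fn /RHSn; exact.
Qed.
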